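(* Let $\Gamma$ be a 3-colex, $c\neq c'$ colors, $E$ a $Z$-type error on the color code on $\Gamma$, and $S$ a $Z$-stabilizer of the 3D toric code on $\Gamma^{*\setminus cc'}$. Then there is a $Z$-stabilizer $\overline S$ of the color code such that $$\delta E+\sum_{e:\,S_e\neq I}e=\delta(E\overline S),$$ where sums of edges are mod 2.
   Context: Colors are $\{r,b,g,y\}$. A 3-colex $\Gamma$ is a 3-dimensional cell complex without boundary in which every vertex is 4-valent and lies in exactly four 3-cells, and whose 3-cells are properly 4-colored: every face lies in exactly two 3-cells, which have different colors. The dual complex $\Gamma^*$ has an $i$-cell for every $(3-i)$-cell of $\Gamma$, with incidences reversed; every 3-cell of $\Gamma^*$ is a tetrahedron. A vertex of $\Gamma^*$ is given the color of the corresponding 3-cell of $\Gamma$, so the four vertices of each tetrahedron have distinct colors. An edge with endpoint colors $x,y$ is an $xy$-edge. The 3D color code on $\Gamma$ has one qubit per tetrahedron $\nu$ of $\Gamma^*$, $X$-stabilizer generators $\prod_{\nu\ni v}X_\nu$ for vertices $v$, and $Z$-stabilizer generators $B^Z_e=\prod_{\nu\supset e}Z_\nu$ for edges $e$; $Z$-stabilizers are products of the $B^Z_e$. For distinct colors $x,y$ with remaining colors $u,w$, $\pi_{xy}(\nu)$ is the unique $uw$-edge of tetrahedron $\nu$. The minor complex $\Gamma^{*\setminus cc'}$ (with $d,d'$ the remaining colors) has as vertices the $d$- and $d'$-vertices, as edges the $dd'$-edges of $\Gamma^*$, one face $f_e$ for each $cc'$-edge $e$ of $\Gamma^*$ whose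 boundary is the set of $dd'$-edges of the tetrahedra containing $e$, and one 3-cell for each vertex of color $c$ or $c'$. The 3D toric code on $\Gamma^{*\setminus cc'}$ has qubits on edges and $Z$-stabilizer generators $\prod_{t\in\partial f}Z_t$ for faces $f$; its $Z$-stabilizers are products of these. $S_e$ denotes the tensor factor of $S$ on edge $e$. The edge boundary of $E=\prod_{\nu\in\Omega}Z_\nu$ is $\delta E=\sum_{\nu\in\Omega}\sum_{\{x,y\}}\pi_{xy}(\nu)$, the sum over the six unordered pairs of distinct colors (i.e. over the six edges of $\nu$), mod 2. *)

(* Defs.v *)
From mathcomp Require Import all_boot.
Set Implicit Arguments. Unset Strict Implicit. Unset Printing Implicit Defensive.

(* Colors {r,b,g,y} are represented by 'I_4.  An unordered pair of distinct
   colors {x,y} is a set P : {set 'I_4} with #|P| = 2.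

   A 3-colex Gamma is represented through its dual complex Gamma^* :
   - cV : vertices of Gamma^* (= 3-cells of Gamma), colored by vcol;
   - cE : edges of Gamma^* (= faces of Gamma), with endpoint sets eends;
   - cF : triangles of Gamma^* (= edges of Gamma);
   - cT : tetrahedra of Gamma^* (= vertices of Gamma);
   - tv t x : the vertex of color x of tetrahedron t;
   - te t P : the edge of t whose endpoints have the colors in P (#|P| = 2);
   - tf t x : the triangle of t opposite to its vertex of color x.
   Axioms: vertex colors are as indicated, edge endpoints are as indicated,
   a triangle determines its opposite color and its three edges, and every
   triangle lies in exactly two tetrahedra (Gamma has no boundary: every edge
   of Gamma has two endpoint vertices). *)
Record colex3 := Colex3 {
  cV : finType; cE : finType; cF : finType; cT : finType;
  vcol : cV -> 'I_4;
  eends : cE -> {set cV};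
  tv : cT -> 'I_4 -> cV;
  te : cT -> {set 'I_4} -> cE;
  tf : cT -> 'I_4 -> cF;
  tv_col : forall t x, vcol (tv t x) = x;
  te_ends : forall t (P : {set 'I_4}), #|P| = 2 ->
     eends (te t P) = [set tv t x | x in P];
  tf_cons : forall t t' x x', tf t x = tf t' x' ->
     x = x' /\ (forall P : {set 'I_4}, #|P| = 2 -> x \notin P -> te t P = te t' P);
  tf_two : forall r : cF, #|[set t | [exists x, tf t x == r]]| = 2
}.

Section ColorCode.
Variable G : colex3.

Definition msum (I U : finType) (A : {set I}) (f : I -> {set U}) : {set U} :=
  [set u | odd #|[set i in A | u \in f i]|].

(* Symmetric difference = mod-2 sum of two chains / product of two Z-Paulis. *)
Definition symd (U : finType) (A B : {set U}) : {set U} := (A :\: B) :|: (B :\: A).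

Definition is_edge_col (e : cE G) (P : {set 'I_4}) : bool :=
  (@vcol G) @: eends e == P.

(* pi_{xy}(nu): the unique uw-edge of nu, {u,w} the complement of {x,y}. *)
Definition pi (nu : cT G) (P : {set 'I_4}) : cE G := te nu (~: P).

(* Edge boundary of the Z-type operator prod_{nu in Om} Z_nu (mod 2). *)
Definition delta (Om : {set cT G}) : {set cE G} :=
  [set g | odd #|[set p : cT G * {set 'I_4} |
                   [&& p.1 \in Om, #|p.2| == 2 & pi p.1 p.2 == g]]|].

Definition tedges (nu : cT G) : {set cE G} :=
  [set te nu P | P in [set P : {set 'I_4} | #|P| == 2]].

Definition BZ (e : cE G) : {set cT G} := [set nu | e \in tedges nu].

Definition cc_Zstab (Sb : {set cT G}) : Prop :=
  exists F : {set cE G}, Sb = msum F BZ.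

(* Minor complex Gamma^{* \ cc'}: boundary (mod 2 chain) of the face f_e for a
   cc'-edge e: the dd'-edges of the tetrahedra containing e. *)
Definition bd_face (c c' : 'I_4) (e : cE G) : {set cE G} :=
  msum [set nu | e \in tedges nu] (fun nu => [set te nu (~: [set c; c'])]).

(* Z-stabilizers of the 3D toric code on Gamma^{* \ cc'}, as sets of edges
   (the edges on which S acts nontrivially). *)
Definition tc_Zstab (c c' : 'I_4) (S : {set cE G}) : Prop :=
  exists F : {set cE G},
    (forall e, e \in F -> is_edge_col e [set c; c']) /\
    S = msum F (bd_face c c').

End ColorCode.

(* Main.v *)
Require Import Defs.
From mathcomp Require Import all_boot.
From mathcomp Require Import all_algebra.
From mathcomp Require Import zify.
Import GRing.Theory.

Section Aux.
Local Open Scope ring_scope.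

Definition chi (b : bool) : 'Z_2 := b%:R.

Lemma chi_inj a b : chi a = chi b -> a = b.
Proof. by case: a; case: b => // /eqP. Qed.

Lemma chi_nat n : chi (odd n) = n%:R.
Proof.
elim: n => [//|n IH]; rewrite /= mulrS -IH.
by case: (odd n); apply/eqP.
Qed.

Lemma chi_addb a b : chi (a (+) b) = chi a + chi b.
Proof. by case: a; case: b; apply/eqP. Qed.

Lemma in_symd (U : finType) (A B : {set U}) u :
  (u \in symd A B) = (u \in A) (+) (u \in B).
Proof. by rewrite !inE; case: (u \in A); case: (u \in B). Qed.

Lemma chi_count (T : finType) (A : {pred T}) (Q : pred T) :
  \sum_(i in A) chi (Q i) = chi (odd #|[set i in A | Q i]|).
Proof.
rewrite chi_nat -sum1_card natr_sum.
rewrite (eq_bigr (fun i => if Q i then 1 else 0)); last first.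
  by move=> i _; rewrite /chi; case: (Q i).
rewrite -big_mkcondr; apply: eq_bigl => i; by rewrite !inE.
Qed.

Lemma chi_msum (I U : finType) (A : {set I}) (f : I -> {set U}) u :
  chi (u \in msum A f) = \sum_(i in A) chi (u \in f i).
Proof. by rewrite chi_count inE. Qed.

Lemma sum_in_chi (T : finType) (A : {set T}) (F : T -> 'Z_2) :
  \sum_(i in A) F i = \sum_i chi (i \in A) * F i.
Proof.
rewrite big_mkcond; apply: eq_bigr => i _.
by rewrite /chi; case: (i \in A); rewrite ?mul1r ?mul0r.
Qed.

Variable G : colex3.

Definition w (nu : cT G) (g : cE G) : 'Z_2 :=
  \sum_(P : {set 'I_4} | (#|P| == 2)%N) chi (Defs.pi nu P == g).

Lemma chi_delta (Om : {set cT G}) g :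
  chi (g \in delta Om) = \sum_nu chi (nu \in Om) * w nu g.
Proof.
rewrite -sum_in_chi /w pair_big_dep /=.
rewrite (@chi_count _ (fun p : cT G * {set 'I_4} => (p.1 \in Om) && (#|p.2| == 2)%N)).
rewrite inE; congr (chi (odd _)); apply: eq_card => p; rewrite !inE /=.
by rewrite andbA.
Qed.

Lemma delta_symd (A B : {set cT G}) g :
  chi (g \in delta (symd A B)) = chi (g \in delta A) + chi (g \in delta B).
Proof.
rewrite !chi_delta -big_split; apply: eq_bigr => nu _.
by rewrite in_symd chi_addb mulrDl.
Qed.

Lemma parity (x : 'I_4) (X : {set cT G}) :
  (forall nu t y, nu \in X -> tf t y = tf nu x -> t \in X) -> ~~ odd #|X|.
Proof.
move=> Hcl.
have -> : #|X| = (\sum_(r in [set tf nu x | nu in X]) 2)%N.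
  rewrite -sum1_card (partition_big_imset (fun nu => tf nu x)) /=.
  apply: eq_bigr => r /imsetP [nu0 Hnu0 ->].
  rewrite sum1dep_card -(tf_two (tf nu0 x)); idtac.
  apply: eq_card => t; rewrite !inE; apply/andP/existsP.
    by case=> _ H; exists x.
  case=> y /eqP H; have [yx _] := tf_cons H; subst y.
  by split; [exact: Hcl H | apply/eqP].
by rewrite sum_nat_const oddM andbF.
Qed.

Variables c c' : 'I_4.
Hypothesis cc : c != c'.

Lemma cc2 : #|[set c; c']| = 2%N.
Proof. by rewrite cards2 cc. Qed.

Lemma BZ_char (e : cE G) : is_edge_col e [set c; c'] ->
  forall nu : cT G, (nu \in BZ e) = (te nu [set c; c'] == e).
Proof.
move=> He nu; rewrite inE /tedges; apply/imsetP/eqP.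
  case=> P; rewrite inE => /eqP HP Ee; subst e.
  move: He; rewrite /is_edge_col te_ends // => /eqP He.
  have HI : [set vcol y | y in [set tv nu x | x in P]] = P.
    apply/setP => y; apply/imsetP/idP.
      by case=> z /imsetP [w' Hw ->] ->; rewrite tv_col.
    move=> Hy; exists (tv nu y); last by rewrite tv_col.
    by apply/imsetP; exists y.
  by rewrite -He HI.
move=> <-; exists [set c; c'] => //; by rewrite inE cc2.
Qed.

Lemma BZ_char2 (e : cE G) : is_edge_col e [set c; c'] ->
  forall nu : cT G, (e \in tedges nu) = (te nu [set c; c'] == e).
Proof. by move=> He nu; have := BZ_char e He nu; rewrite inE. Qed.

Lemma cardC2 (P : {set 'I_4}) : #|P| = 2%N -> #|~: P| = 2%N.
Proof.
move=> HP; have := cardsCs P; rewrite HP card_ord.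
have := subset_leq_card (subsetT (~: P)); rewrite cardsT card_ord.
lia.
Qed.

Lemma key (e g : cE G) : is_edge_col e [set c; c'] ->
  \sum_(nu : cT G) chi (nu \in BZ e) * w nu g =
  \sum_(nu in [set nu | e \in tedges nu]) chi (g \in [set te nu (~: [set c; c'])]).
Proof.
move=> He; rewrite -sum_in_chi.
have Hcc : (#|[set c; c']| == 2)%N by rewrite cc2.
rewrite (eq_bigr (fun nu => chi (Defs.pi nu [set c; c'] == g) +
   \sum_(P : {set 'I_4} | (#|P| == 2)%N && (P != [set c; c'])) chi (Defs.pi nu P == g)));
  last by move=> nu _; rewrite /w (bigD1 [set c; c']).
rewrite big_split /=.
rewrite [X in _ + X]exchange_big /= [X in _ + X]big1 ?addr0; last first.
  move=> P /andP [/eqP HP2 HPne].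
  rewrite chi_count.
  have /set0Pn [x Hx] : P :\: [set c; c'] != set0.
    rewrite setD_eq0; apply: contra HPne => Hsub.
    by rewrite eqEcard Hsub HP2 cc2.
  move: Hx; rewrite inE => /andP [Hxn HxP].
  suff /negbTE -> : ~~ odd #|[set i in BZ e | Defs.pi i P == g]| by [].
  apply: (parity x).
  move=> nu t y; rewrite !inE !(BZ_char2 _ He) => /andP [/eqP Hnu /eqP Hpi] H.
  have [yx Hte] := tf_cons H; subst y.
  rewrite /Defs.pi in Hpi.
  rewrite (Hte _ cc2 Hxn) Hnu eqxx /= /Defs.pi (Hte _ (cardC2 _ HP2)) ?Hpi //.
  by rewrite inE HxP.
apply: eq_bigr => nu _; by rewrite inE eq_sym.
Qed.

End Aux.

Theorem lemma12 (G : colex3) (c c' : 'I_4) (E : {set cT G}) (S : {set cE G}) :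
  c != c' -> tc_Zstab c c' S ->
  exists Sb : {set cT G}, cc_Zstab Sb /\
    symd (delta E) S = delta (symd E Sb).
Proof.
move=> cc [F [HF ->]].
exists (msum F (@BZ G)); split; first by exists F.
apply/setP => g; apply: chi_inj.
rewrite in_symd chi_addb delta_symd; congr (_ + _)%R.
rewrite chi_msum chi_delta.
rewrite (eq_bigr (fun nu => \sum_(e in F) (chi (nu \in BZ e) * @w G nu g))%R); last first.
  by move=> nu _; rewrite chi_msum big_distrl.
rewrite exchange_big /=; apply: eq_bigr => e He.
by rewrite chi_msum (@key G c c' cc e g (HF e He)).
Qed.
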